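(* The cone of (coarse) Hilbert functions of finitely generated squarefree $\mathbb{N}^n$-graded $S$-modules generated in degree zero equals the cone of (coarse) Hilbert functions of Stanley–Reisner rings $\mathbb{k}[\Delta]=S/I_\Delta$ of simplicial complexes $\Delta$ on $[n]$.
   Context: $S=\mathbb{k}[x_1,\dots,x_n]$ with fine $\mathbb{N}^n$-grading. A module $M$ is squarefree if for all $a\in\mathbb{N}^n$ and $i$ with $a_i\neq0$, multiplication by $x_i:M_a\to M_{a+e_i}$ is bijective. The coarse Hilbert function is $H_M(i)=\dim_{\mathbb{k}}\bigoplus_{|a|=i}M_a$. The cone of Hilbert functions of a family of modules is the convex cone in $\mathbb{R}^{\mathbb{N}}$ spanned by their Hilbert functions. *)

(* Defs.v *)
From HB Require Import structures.
From mathcomp Require Import all_boot all_order all_algebra.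
From mathcomp Require Import reals.
Set Implicit Arguments. Unset Strict Implicit. Unset Printing Implicit Defensive.
Import Order.TTheory GRing.Theory Num.Theory.
Local Open Scope ring_scope.

(* Fine degrees a in N^n, as finite functions (extensional equality). *)
Notation deg n := {ffun 'I_n -> nat}.

Definition shift (n : nat) (a : deg n) (i : 'I_n) : deg n :=
  [ffun j => (a j + (j == i))%N].

(* Model of a finitely generated N^n-graded S-module generated in degree 0:
   M = S^m / N, where S^m = S(0)^m is free on m generators of degree 0.
   Identifying each graded component (S^m)_a = k^m * x^a with k^m, a graded
   submodule N of S^m is a family of subspaces N_a of k^m (row spaces of
   square matrices) with x_i N_a \subseteq N_{a+e_i}, i.e. N_a <= N_{a+e_i}.
   Then M_a = k^m / N_a, and multiplication by x_i : M_a -> M_{a+e_i} is the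
   map induced by the identity of k^m. *)
Definition graded_submod (k : fieldType) (n m : nat)
  (N : deg n -> 'M[k]_m) : Prop :=
  forall (a : deg n) (i : 'I_n), (N a <= N (shift a i))%MS.

(* Squarefree: for a_i <> 0, x_i : M_a -> M_{a+e_i} is bijective.
   The induced map k^m/N_a -> k^m/N_{a+e_i} is always surjective and is
   injective iff N_{a+e_i} \subseteq N_a. *)
Definition squarefree_quot (k : fieldType) (n m : nat)
  (N : deg n -> 'M[k]_m) : Prop :=
  forall (a : deg n) (i : 'I_n), (0 < a i)%N -> (N (shift a i) <= N a)%MS.

Definition dim_quot (k : fieldType) (n m : nat) (N : deg n -> 'M[k]_m)
  (a : deg n) : nat := (m - \rank (N a))%N.

Definition hilb (k : fieldType) (n m : nat) (N : deg n -> 'M[k]_m)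
  (d : nat) : nat :=
  (\sum_(b : {ffun 'I_n -> 'I_d.+1} | (\sum_(j < n) (b j : nat) == d)%N)
      dim_quot N [ffun j => (b j : nat)])%N.

Definition simplicial_complex (n : nat) (D : {set {set 'I_n}}) : Prop :=
  set0 \in D /\ forall F G : {set 'I_n}, F \in D -> G \subset F -> G \in D.

Definition supp (n : nat) (a : deg n) : {set 'I_n} := [set j | (0 < a j)%N].

(* Stanley-Reisner ideal I_D = (x_F : F not in D).  x^a \in I_D iff some
   generator x_F divides x^a, i.e. F \subset supp a.  k[D] = S / I_D is the
   cyclic module S^1 / I_D, whose relation subspace in degree a is all of
   k^1 if x^a \in I_D and 0 otherwise. *)
Definition SR_rel (k : fieldType) (n : nat) (D : {set {set 'I_n}})
  (a : deg n) : 'M[k]_1 :=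
  if [exists F : {set 'I_n}, (F \notin D) && (F \subset supp a)]
  then 1%:M else 0.

Definition cone (R : realType) (P : (nat -> R) -> Prop) (f : nat -> R) : Prop :=
  exists (r : nat) (c : 'I_r -> R) (g : 'I_r -> nat -> R),
    (forall j, 0 <= c j) /\ (forall j, P (g j)) /\
    (forall d, f d = \sum_(j < r) c j * g j d).

(* Main.v *)
Require Import Defs.
From HB Require Import structures.
From mathcomp Require Import all_boot all_order all_algebra.
From mathcomp Require Import reals.
From mathcomp Require Import zify.
Set Implicit Arguments. Unset Strict Implicit. Unset Printing Implicit Defensive.
Import Order.TTheory GRing.Theory Num.Theory.
Local Open Scope ring_scope.

Section Cone.
Variable R : realType.
Implicit Types (P Q : (nat -> R) -> Prop).

Lemma cone_ext P f f' : (forall d, f d = f' d) -> cone P f -> cone P f'.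
Proof.
move=> E [r [c [g [H1 [H2 H3]]]]]; exists r, c, g; split=> //; split=> // d.
by rewrite -E.
Qed.

Lemma cone_zero P : cone P (fun _ => 0).
Proof.
exists 0%N, (fun _ => 0), (fun _ _ => 0); split; first by case.
split; first by case.
by move=> d; rewrite big_ord0.
Qed.

Lemma cone_single P h : P h -> cone P h.
Proof.
move=> Ph; exists 1%N, (fun _ => 1), (fun _ => h); split=> //; split=> // d.
by rewrite big_ord1 mul1r.
Qed.

Lemma cone_add P f1 f2 : cone P f1 -> cone P f2 -> cone P (fun d => f1 d + f2 d).
Proof.
move=> [r1 [c1 [g1 [A1 [B1 C1]]]]] [r2 [c2 [g2 [A2 [B2 C2]]]]].
exists (r1 + r2)%N,
  (fun j => match split j with inl i => c1 i | inr i => c2 i end),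
  (fun j => match split j with inl i => g1 i | inr i => g2 i end).
split; first by move=> j; case: (split j).
split; first by move=> j; case: (split j).
move=> d; rewrite big_split_ord /= C1 C2; congr (_ + _); apply: eq_bigr => i _.
  by rewrite (unsplitK (inl _ i)).
by rewrite (unsplitK (inr _ i)).
Qed.

Lemma cone_scale P (a : R) f : 0 <= a -> cone P f -> cone P (fun d => a * f d).
Proof.
move=> a0 [r [c [g [A [B C]]]]]; exists r, (fun j => a * c j), g.
split; first by move=> j; apply: mulr_ge0.
split=> // d; rewrite C mulr_sumr; apply: eq_bigr => j _; by rewrite mulrA.
Qed.

Lemma cone_trans P Q f : (forall h, P h -> cone Q h) -> cone P f -> cone Q f.
Proof.
move=> PQ [r [c [g [A [B C]]]]].
apply: (@cone_ext _ (fun d => \sum_(j < r) c j * g j d)) => [d|]; first by rewrite C.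
elim: r c g A B {C} => [|r IH] c g A B.
  by apply: (@cone_ext _ (fun _ => 0)) => [d|]; rewrite ?big_ord0 //; apply: cone_zero.
apply: (@cone_ext _ (fun d => \sum_(j < r) c (widen_ord (leqnSn r) j) * g (widen_ord (leqnSn r) j) d
     + c ord_max * g ord_max d)) => [d|]; first by rewrite big_ord_recr.
apply: cone_add; first by apply: IH.
by apply: cone_scale => //; apply: PQ.
Qed.

End Cone.

Section Modules.
Variables (k : fieldType) (n m : nat) (N : deg n -> 'M[k]_m).

Lemma step_ind (P : deg n -> Prop) (b : deg n) :
  P b ->
  (forall (a : deg n) (j : 'I_n), (a j < b j)%N -> (forall i, a i <= b i)%N -> P (shift a j) -> P a) ->
  forall a : deg n, (forall j, a j <= b j)%N -> P a.
Proof.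
move=> Pb Hstep a; move Hs: (\sum_j (b j - a j))%N => s.
elim: s a Hs => [|s IH] a Hs Hab.
  have -> : a = b; last by [].
  apply/ffunP => j; move/eqP: Hs; rewrite sum_nat_eq0 => /forallP /(_ j) /= /eqP.
  have := Hab j; lia.
case: (boolP [exists j, a j < b j]%N) => [/existsP [j Hj] | Hno].
  apply: (Hstep a j) => //; apply: IH.
    rewrite (bigD1 j) //= in Hs; rewrite (bigD1 j) //= ffunE eqxx.
    move: Hs.
    have -> : (\sum_(i < n | i != j) (b i - shift a j i) =
               \sum_(i < n | i != j) (b i - a i))%N.
      by apply: eq_bigr => i /negbTE Hi; rewrite ffunE Hi addn0.
    rewrite /= addn1; set S := (\sum_(i < n | i != j) (b i - a i))%N; clearbody S; lia.
  move=> i; rewrite ffunE; case: eqP => [->|_]; last by rewrite addn0.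
  by rewrite addn1.
exfalso; move: Hs; rewrite big1 // => i _.
move: Hno; rewrite negb_exists => /forallP /(_ i); have := Hab i; lia.
Qed.

Hypotheses (HG : graded_submod N) (HS : squarefree_quot N).

Lemma graded_le (a b : deg n) : (forall j, a j <= b j)%N -> (N a <= N b)%MS.
Proof.
apply: (@step_ind (fun a => N a <= N b)%MS b) => [|a' j _ _ H]; first exact: submx_refl.
exact: submx_trans (HG a' j) H.
Qed.

Lemma sqf_le (a b : deg n) : (forall j, a j <= b j)%N ->
  (forall j, 0 < b j -> 0 < a j)%N -> (N b <= N a)%MS.
Proof.
move=> Hab; move: a Hab.
apply: (@step_ind (fun a => (forall j, 0 < b j -> 0 < a j)%N -> (N b <= N a)%MS) b)
   => [_|a' j Hj Hle H Hpos]; first exact: submx_refl.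
have Hp : (0 < a' j)%N by apply: Hpos; lia.
apply: submx_trans (HS Hp); apply: H => i /Hpos; rewrite ffunE; lia.
Qed.

Definition ind (F : {set 'I_n}) : deg n := [ffun j => ((j \in F) : nat)].

Definition G F := dim_quot N (ind F).

Lemma supp_ind F : supp (ind F) = F.
Proof. by apply/setP => j; rewrite inE ffunE; case: (j \in F). Qed.

Lemma dim_G a : dim_quot N a = G (supp a).
Proof.
rewrite /G /dim_quot; congr (m - _)%N; apply/eqP; rewrite eqn_leq.
have H1 : forall j, (ind (supp a) j <= a j)%N.
  by move=> j; rewrite ffunE inE; case: (ltnP 0 (a j)).
apply/andP; split; apply: mxrankS.
  apply: sqf_le => // j; rewrite ffunE inE => ->; done.
exact: graded_le.
Qed.

Lemma G_mono (F F' : {set 'I_n}) : F \subset F' -> (G F' <= G F)%N.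
Proof.
move=> /subsetP sub; rewrite /G /dim_quot; apply: leq_sub2l; apply: mxrankS.
apply: graded_le => j; rewrite !ffunE.
by case E: (j \in F) => //=; rewrite (sub _ E).
Qed.

Lemma G_le F : (G F <= m)%N.
Proof. exact: leq_subr. Qed.

Definition Dt (t : nat) : {set {set 'I_n}} :=
  if (t < G set0)%N then [set F | t < G F]%N else [set set0].

Lemma Dt_simpl t : simplicial_complex (Dt t).
Proof.
rewrite /Dt; case: ifP => Ht; split.
- by rewrite inE.
- move=> F F' ; rewrite !inE => HF sub; exact: leq_trans HF (G_mono sub).
- by rewrite inE.
- move=> F F'; rewrite !inE => /eqP -> ; by rewrite subset0.
Qed.

Lemma dim_SR t a : (t < G set0)%N ->
  dim_quot (SR_rel k (Dt t)) a = (t < G (supp a))%N.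
Proof.
move=> Ht; rewrite /dim_quot /SR_rel /Dt Ht.
case: ifP => [/existsP [F /andP [HF Hsub]] | Hno].
  rewrite mxrank1 subnn; move: HF; rewrite inE => HF.
  have := G_mono Hsub; lia.
rewrite mxrank0 subn0; case: ltnP => // H; move: Hno => /negbT /negP; case.
by apply/existsP; exists (supp a); rewrite inE -leqNgt H subxx.
Qed.

Lemma sum_lt x p : (x <= p)%N -> (\sum_(t < p) (t < x) = x)%N.
Proof.
move=> Hx; suff : (\sum_(t < p) (t < x) = minn x p)%N by move=> ->; lia.
elim: p {Hx} => [|p IH]; first by rewrite big_ord0; lia.
rewrite big_ord_recr /= IH; case: (ltnP p x) => H /=; lia.
Qed.

Lemma hilb_decomp d : hilb N d =
  (\sum_(t < m) (t < G set0) * hilb (SR_rel k (Dt t)) d)%N.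
Proof.
rewrite /hilb.
under eq_bigr => b _ do rewrite dim_G -(@sum_lt (G _) m (G_le _)).
rewrite exchange_big /=; apply: eq_bigr => t _.
case Ht: (t < G set0)%N.
  rewrite mul1n; apply: eq_bigr => b _; by rewrite dim_SR.
rewrite /= mul0n big1 // => b _; apply/eqP; rewrite eqb0 -leqNgt.
have := G_mono (sub0set (supp [ffun j => (b j : nat)])); move/negbT: Ht; rewrite -leqNgt => h1 h2; exact: leq_trans h2 h1.
Qed.

End Modules.

Lemma SR_graded (k : fieldType) n (D : {set {set 'I_n}}) :
  graded_submod (SR_rel k D).
Proof.
move=> a i; rewrite /SR_rel; case: ifP => H1; last exact: sub0mx.
have -> : [exists F, (F \notin D) && (F \subset supp (shift a i))].
  move/existsP: H1 => [F /andP [HF Hs]]; apply/existsP; exists F; rewrite HF /=.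
  apply: subset_trans Hs _; apply/subsetP => j; rewrite !inE ffunE => h; exact: leq_trans h (leq_addr _ _).
exact: submx_refl.
Qed.

Lemma SR_sqf (k : fieldType) n (D : {set {set 'I_n}}) :
  squarefree_quot (SR_rel k D).
Proof.
move=> a i Hi; rewrite /SR_rel; have -> : supp (shift a i) = supp a; last exact: submx_refl.
apply/setP => j; rewrite !inE ffunE; case: eqP => [->|_]; first by rewrite /= addn1 Hi.
by rewrite addn0.
Qed.

Theorem corollary4p12 (k : fieldType) (R : realType) (n : nat) (f : nat -> R) :
  cone (fun h : nat -> R =>
          exists (m : nat) (N : deg n -> 'M[k]_m),
            graded_submod N /\ squarefree_quot N /\
            forall d, h d = (hilb N d)%:R) f
  <->
  cone (fun h : nat -> R =>
          exists D : {set {set 'I_n}},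
            simplicial_complex D /\
            forall d, h d = (hilb (SR_rel k D) d)%:R) f.
Proof.
split; apply: cone_trans => h.
  move=> [m [N [HG [HS Hh]]]].
  exists m, (fun t => ((t < G N set0)%N)%:R), (fun t d => (hilb (SR_rel k (Dt N t)) d)%:R).
  split; first by move=> j; apply: ler0n.
  split; first by move=> j; exists (Dt N j); split=> //; exact: Dt_simpl.
  move=> d; rewrite Hh (hilb_decomp HG HS) natr_sum; apply: eq_bigr => t _.
  by rewrite natrM.
move=> [D [_ Hh]]; apply: cone_single; exists 1%N, (SR_rel k D).
split; first exact: SR_graded.
by split; first exact: SR_sqf.
Qed.
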